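(* If $G$ is a connected, claw-free cubic graph of order $n$, then $\sigma_{(3,q)}(G) = \beta(G)$ for every $q \in \mathbb{N}\cup\{\infty\}$ with $q\ge 2$.
   Context: A graph is claw-free if it has no induced subgraph isomorphic to $K_{1,3}$; it is cubic if every vertex has degree $3$. $\beta(G)$ denotes the vertex covering number (minimum size of a set of vertices meeting every edge). $(p,q)$-spreading: let $p\in\mathbb{N}$ and $q\in\mathbb{N}\cup\{\infty\}$. Start with a set $S\subseteq V(G)$ of blue vertices, all other vertices white. The color change rule: if a white vertex $w$ has at least $p$ blue neighbors, and at least one of the blue neighbors of $w$ has at most $q$ white neighbors, then $w$ is recolored blue. $S$ is a $(p,q)$-spreading set if repeatedly applying this rule eventually colors all vertices blue. $\sigma_{(p,q)}(G)$ is the minimum cardinality of a $(p,q)$-spreading set of $G$. *)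

(* Defs.v *)
(* A simple graph is a symmetric irreflexive relation e on a finType T. *)
From mathcomp Require Import all_boot.
Set Implicit Arguments. Unset Strict Implicit. Unset Printing Implicit Defensive.

Section Graphs.
Variables (T : finType) (e : rel T).

Definition nbhd (x : T) : {set T} := [set y | e x y].

Definition cubic : Prop := forall x : T, #|nbhd x| = 3.

Definition connected : Prop := forall x y : T, connect e x y.

Definition claw_free : Prop :=
  ~ exists x a b c : T,
      [/\ e x a, e x b, e x c,
          [&& a != b, a != c & b != c] &
          [&& ~~ e a b, ~~ e a c & ~~ e b c]].

Definition vertex_cover (S : {set T}) : bool :=
  [forall x, forall y, e x y ==> (x \in S) || (y \in S)].

(* vertex covering number beta(G) (setT is always a cover, so #|T| is a valid default) *)
Definition beta : nat := \big[minn/#|T|]_(S : {set T} | vertex_cover S) #|S|.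

(* q in N ∪ {∞}: None encodes ∞ *)
Definition qle (k : nat) (q : option nat) : bool :=
  if q is Some q' then k <= q' else true.

Definition can_color (p : nat) (q : option nat) (B : {set T}) (w : T) : bool :=
  [&& w \notin B,
      p <= #|[set u in B | e w u]| &
      [exists u in B, e w u && qle #|[set v | e u v & v \notin B]| q]].

(* apply the rule to all currently eligible white vertices; since the rule is
   monotone in B, this reaches the same final set as sequential application *)
Definition spread_step (p : nat) (q : option nat) (B : {set T}) : {set T} :=
  B :|: [set w | can_color p q B w].

Definition spread_closure (p : nat) (q : option nat) (S : {set T}) : {set T} :=
  iter #|T| (spread_step p q) S.

Definition spreading_set (p : nat) (q : option nat) (S : {set T}) : bool :=
  spread_closure p q S == setT.

(* sigma_(p,q)(G) (setT is always spreading) *)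
Definition sigma (p : nat) (q : option nat) : nat :=
  \big[minn/#|T|]_(S : {set T} | spreading_set p q S) #|S|.

End Graphs.

(* Main.v *)
Require Import Defs.
From mathcomp Require Import all_boot.

Section Aux.
Variables (T : finType) (e : rel T).
Hypotheses (e_sym : symmetric e) (e_irr : irreflexive e)
  (Gcf : claw_free e) (Gcub : cubic e).

Lemma vc_step q (hq : if q is Some q' then 2 <= q' else true) (S : {set T}) :
  vertex_cover e S -> spread_step e 3 q S = setT.
Proof.
move=> /forallP vc; apply/setP => w; rewrite !inE.
case wS: (w \in S) => //=.
have nbS : forall u, e w u -> u \in S.
  by move=> u ewu; move: (forallP (vc w) u); rewrite ewu wS.
rewrite /can_color wS /=.
apply/andP; split.
  have -> : [set u in S | e w u] = nbhd e w.
    by apply/setP => u; rewrite !inE; case ewu: (e w u); rewrite ?andbF ?nbS.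
  by rewrite Gcub.
have : 0 < #|nbhd e w| by rewrite Gcub.
case/card_gt0P => u; rewrite inE => ewu.
apply/existsP; exists u; rewrite nbS //= ewu /=.
case: q hq => [q' hq'|] //=.
apply: (leq_trans _ hq'); rewrite leqNgt; apply/negP => /card_gt2P.
move=> [a [b [c [[aW bW cW] [ab bc ca]]]]].
move: aW bW cW; rewrite !inE => /andP[ea aS] /andP[eb bS] /andP[ec cS].
apply: Gcf; exists u, a, b, c; split => //.
  by rewrite ab bc andbT eq_sym ca.
have ind : forall x y, x \notin S -> y \notin S -> ~~ e x y.
  move=> x y xS yS; apply/negP => exy.
  by move: (forallP (vc x) y); rewrite exy /= (negbTE xS) (negbTE yS).
by rewrite !ind.
Qed.

Lemma step_setT p q : spread_step e p q setT = setT.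
Proof. by apply/setP => x; rewrite !inE. Qed.

Lemma iter_setT p q n : iter n (spread_step e p q) setT = setT.
Proof. by elim: n => //= n ->; rewrite step_setT. Qed.

Lemma vc_spreading q (hq : if q is Some q' then 2 <= q' else true) (S : {set T}) :
  vertex_cover e S -> spreading_set e 3 q S.
Proof.
move=> vc; rewrite /spreading_set /spread_closure.
case E: #|T| => [|n].
  apply/eqP/setP => x; exfalso.
  have : 0 < #|T| by apply/card_gt0P; exists x.
  by rewrite E.
by rewrite iterSr vc_step // iter_setT.
Qed.

Lemma spreading_vc q (S : {set T}) :
  spreading_set e 3 q S -> vertex_cover e S.
Proof.
move=> sp; apply/forallP => x; apply/forallP => y; apply/implyP => exy.
apply/negPn/negP; rewrite negb_or => /andP[xS yS].
have key : forall n, (x \notin iter n (spread_step e 3 q) S) &&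
                     (y \notin iter n (spread_step e 3 q) S).
  elim => [|n IH] /=; first by rewrite xS yS.
  move: IH; set B := iter n _ S => /andP[xB yB].
  have bad : forall a b, e a b -> a \notin B -> b \notin B ->
      a \notin spread_step e 3 q B.
    move=> a b eab aB bB; rewrite !inE (negbTE aB) /= /can_color aB /=.
    have : #|[set u in B | e a u]| <= 2.
      have sub : [set u in B | e a u] \subset nbhd e a :\ b.
        apply/subsetP => u; rewrite !inE => /andP[uB eau].
        rewrite eau andbT; apply/eqP => ub; subst u; by rewrite uB in bB.
      apply: (leq_trans (subset_leq_card sub)).
      have : #|nbhd e a| = (b \in nbhd e a) + #|nbhd e a :\ b| by rewrite (cardsD1 b).
      rewrite Gcub inE eab /= => h; by rewrite -[X in _ <= X]/(3.-1) h.
    by rewrite leqNgt => /negbTE ->.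
  rewrite (bad x y) ?(bad y x) //; by rewrite e_sym.
move: (key #|T|) => /andP[h _].
by move: sp; rewrite /spreading_set /spread_closure => /eqP E; rewrite E inE in h.
Qed.

End Aux.

Theorem proposition3p8 (T : finType) (e : rel T)
  (e_sym : symmetric e) (e_irr : irreflexive e)
  (Gconn : connected e) (Gcf : claw_free e) (Gcub : cubic e)
  (q : option nat) (hq : if q is Some q' then 2 <= q' else true) :
  sigma e 3 q = beta e.
Proof.
rewrite /sigma /beta; apply: eq_bigl => S.
apply/idP/idP; first exact: spreading_vc.
exact: vc_spreading.
Qed.
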